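(* Let $p\in(0,1]$ and let $\mathcal{D}$ be a distribution supported on $[0,1]$ with $Q=\sup\{y:\Pr_{x\sim\mathcal{D}}(x\le y)\le p\}$. Consider the scoring rule $f_p$ in which each voter gives $\sum_{\ell=k}^m\binom{m}{\ell}(1-p)^\ell p^{m-\ell}$ points to the alternative she ranks in position $k$ (selecting an alternative with largest total score, ties broken arbitrarily). Then for all $n,m$ and every preference profile $\sigma$, $\mathbb{E}[\mathrm{sw}(f_p(\sigma),u)]\ge(1-p)Q\max_{j\in A}\mathbb{E}[\mathrm{sw}(j,u)]$.
   Context: There are $n$ voters and $m$ alternatives $A=\{1,\dots,m\}$. A preference profile $\sigma$ consists of a ranking of $A$ for each voter; position $1$ is the top. Given $\mathcal{D}$ and $\sigma$, a random utility profile $u$ consistent with $\sigma$ is generated as follows: independently for each voter $i$, draw $m$ i.i.d. samples from $\mathcal{D}$ and assign them, from highest to lowest, to the alternatives in the order of voter $i$'s ranking. The social welfare of $j$ is $\mathrm{sw}(j,u)=\sum_i u_{ij}$; expectations are over $u$. *)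

(* Defs.v *)
From HB Require Import structures.
From mathcomp Require Import all_boot all_order all_algebra fingroup perm.
From mathcomp Require Import all_classical all_reals all_analysis.
Set Implicit Arguments. Unset Strict Implicit. Unset Printing Implicit Defensive.
Import Order.TTheory GRing.Theory Num.Theory.
Local Open Scope ring_scope.
Local Open Scope classical_set_scope.
Local Open Scope ereal_scope.

(* Alternatives are 'I_m (alternative j+1 of the paper is j : 'I_m).
   A preference profile is sigma : 'I_n -> {perm 'I_m}, where (sigma i) k is
   the alternative that voter i ranks at (0-indexed) position k, i.e. at
   paper position k+1.  The position of alternative j for voter i is
   (sigma i)^-1 j. *)
Definition profile (n m : nat) := 'I_n -> {perm 'I_m}.

Section Model.
Variable R : realType.
Variable D : probability R R.

(* Expectation of g(x_1,...,x_k) where x_1..x_k are i.i.d. samples from D,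
   written as the iterated integral (Tonelli) w.r.t. the product measure D^k. *)
Fixpoint iid_expect (k : nat) (g : seq R -> \bar R) : \bar R :=
  if k is k'.+1 then \int[D]_x iid_expect k' (fun s => g (x :: s))
  else g [::].

Variables (n m : nat).

Definition voter_samples (s : seq R) (i : 'I_n) : seq R :=
  take m (drop (i * m) s).

(* Utility profile consistent with sigma: voter i's samples sorted from
   highest to lowest are assigned to alternatives in the order of its ranking. *)
Definition utility (sigma : profile n m) (s : seq R) (i : 'I_n) (j : 'I_m) : R :=
  nth 0%R (sort (fun x y : R => (y <= x)%R) (voter_samples s i))
      ((sigma i)^-1%g j).

Definition sw (sigma : profile n m) (s : seq R) (j : 'I_m) : R :=
  (\sum_(i < n) utility sigma s i j)%R.

Definition expected_sw (sigma : profile n m) (j : 'I_m) : \bar R :=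
  iid_expect (n * m) (fun s => (sw sigma s j)%:E).

End Model.

(* Scoring rule f_p: points to the alternative in (0-indexed) position k,
   i.e. paper position k+1: sum_{l=k+1}^m C(m,l) (1-p)^l p^(m-l). *)
Definition fp_points (R : realType) (p : R) (m k : nat) : R :=
  (\sum_(k.+1 <= l < m.+1) 'C(m, l)%:R * (1 - p) ^+ l * p ^+ (m - l))%R.

Definition fp_score (R : realType) (p : R) (n m : nat) (sigma : profile n m)
    (j : 'I_m) : R :=
  (\sum_(i < n) fp_points p m ((sigma i)^-1%g j))%R.

(* f_p(sigma) may be any alternative of maximal total score (arbitrary ties). *)
Definition fp_winner (R : realType) (p : R) (n m : nat) (sigma : profile n m)
    (w : 'I_m) : Prop :=
  forall j : 'I_m, (fp_score p sigma j <= fp_score p sigma w)%R.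

Definition quantileQ (R : realType) (D : probability R R) (p : R) : \bar R :=
  ereal_sup [set y%:E | y in [set y : R | D [set` `]-oo, y]] <= p%:E]].

(* Main.v *)
Require Import Defs.
From HB Require Import structures.
From mathcomp Require Import all_boot all_order all_algebra fingroup perm.
From mathcomp Require Import all_classical all_reals all_analysis.
From mathcomp Require Import lra ring zify.
Import Order.TTheory GRing.Theory Num.Theory.
Local Open Scope ring_scope.
Local Open Scope classical_set_scope.
Local Open Scope ereal_scope.
Section Wth.
Local Open Scope ring_scope.
Variable R : realType.

Fixpoint W (q : R) (k : nat) (G : seq bool -> R) : R :=
  if k is k'.+1 then q * W q k' (fun b => G (true :: b)) + (1 - q) * W q k' (fun b => G (false :: b))
  else G [::].

Lemma W_ext q k G1 G2 : (forall b, size b = k -> G1 b = G2 b) -> W q k G1 = W q k G2.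
Proof.
elim: k G1 G2 => [|k IH] G1 G2 H /=; first by apply: H.
congr (_ * _ + _ * _); apply: IH => b Hb; apply: H; by rewrite /= Hb.
Qed.

Lemma W_const q k c : W q k (fun _ => c) = c.
Proof. elim: k => [|k IH] //=; rewrite IH; ring. Qed.

Lemma W_add q k G1 G2 : W q k (fun b => G1 b + G2 b) = W q k G1 + W q k G2.
Proof.
elim: k G1 G2 => [|k IH] G1 G2 //=.
rewrite (IH (fun b => G1 (true :: b))) (IH (fun b => G1 (false :: b))); ring.
Qed.

Lemma W_scale q k c G : W q k (fun b => c * G b) = c * W q k G.
Proof.
elim: k G => [|k IH] G //=.
rewrite (IH (fun b => G (true :: b))) (IH (fun b => G (false :: b))); ring.
Qed.

Lemma W_sum q k (I : finType) (G : I -> seq bool -> R) :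
  W q k (fun b => \sum_(i : I) G i b) = \sum_(i : I) W q k (G i).
Proof.
elim: (index_enum I) => [|i s IH].
  rewrite big_nil; transitivity (W q k (fun _ => 0)); last by rewrite W_const.
  by apply: W_ext => b _; rewrite big_nil.
rewrite big_cons -IH -W_add; apply: W_ext => b _; by rewrite big_cons.
Qed.

Lemma W_mono q k G1 G2 : 0 <= q <= 1 -> (forall b, G1 b <= G2 b) -> W q k G1 <= W q k G2.
Proof.
move=> /andP[q0 q1]; elim: k G1 G2 => [|k IH] G1 G2 H //=.
have h1 := IH (fun b => G1 (true :: b)) (fun b => G2 (true :: b)) (fun b => H _).
have h2 := IH (fun b => G1 (false :: b)) (fun b => G2 (false :: b)) (fun b => H _).
have q1' : 0 <= 1 - q by lra.
by rewrite lerD // ler_wpM2l.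
Qed.

Lemma W_ge0 q k G : 0 <= q <= 1 -> (forall b, 0 <= G b) -> 0 <= W q k G.
Proof. by move=> hq H; rewrite -(W_const q k 0); apply: W_mono. Qed.

Lemma W_drop q j c H : W q (j + c) (fun b => H (drop j b)) = W q c H.
Proof.
elim: j H => [|j IH] H /=; first by apply: W_ext => b _; rewrite drop0.
change (q * W q (j + c) (fun b => H (drop j b)) + (1 - q) * W q (j + c) (fun b => H (drop j b)) = W q c H).
rewrite IH; ring.
Qed.

Lemma W_take q m c H : W q (m + c) (fun b => H (take m b)) = W q m H.
Proof.
elim: m H => [|m IH] H /=.
  by rewrite -[RHS](W_const q c); apply: W_ext => b _; rewrite take0.
change (q * W q (m + c) (fun b => H (true :: take m b)) + (1 - q) * W q (m + c) (fun b => H (false :: take m b)) = q * W q m (fun b => H (true :: b)) + (1 - q) * W q m (fun b => H (false :: b))).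
by rewrite (IH (fun b => H (true :: b))) (IH (fun b => H (false :: b))).
Qed.

Lemma W_count q m : W q m (fun b => (count id b)%:R) = m%:R * q.
Proof.
elim: m => [|m IH] /=; first by rewrite mul0r.
have -> : W q m (fun b => (1 + count id b)%:R) = 1 + W q m (fun b => (count id b)%:R).
  transitivity (W q m (fun _ => 1) + W q m (fun b => (count id b)%:R)); last by rewrite W_const.
  by rewrite -W_add; apply: W_ext => b _; rewrite natrD.
have -> : W q m (fun b => (0 + count id b)%:R) = W q m (fun b => (count id b)%:R).
  by apply: W_ext => b _; rewrite add0n.
rewrite IH -natr1; ring.
Qed.

Lemma W_monoq q q' m (F : nat -> R) : 0 <= q -> q <= q' -> q' <= 1 ->
  (forall c, F c <= F c.+1) ->
  W q m (fun b => F (count id b)) <= W q' m (fun b => F (count id b)).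
Proof.
move=> q0 qq q1; elim: m F => [|m IH] F HF //=.

set A := W q m _; set B := W q m _; set A' := W q' m _; set B' := W q' m _.
have hA : A <= A' by apply: (IH (fun c => F c.+1)).
have hB : B <= B' by apply: (IH F).
have hAB : B <= A.
  by apply: W_mono => [|b]; [lra|apply: HF].
nra.
Qed.

Lemma sum_lt_count (m c : nat) : \sum_(k < m) (k < c)%:R = (minn c m)%:R :> R.
Proof.
elim: m => [|m IH]; first by rewrite big_ord0 minn0.
rewrite big_ord_recr /= IH -natrD; congr (_%:R).
by case: (ltnP m c) => h /=; lia.
Qed.

Lemma W_count_gen q m (F : nat -> R) :
  W q m (fun b => F (count id b)) =
  \sum_(l < m.+1) 'C(m, l)%:R * q ^+ l * (1 - q) ^+ (m - l) * F l.
Proof.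
elim: m F => [|m IH] F.
  by rewrite /= big_ord_recl big_ord0 bin0 !expr0 addr0 !mul1r.
rewrite /= (IH (fun c => F c.+1)) (IH F).
rewrite [RHS]big_ord_recl bin0 expr0 subn0 mul1r.
have L0 : forall (k : nat) (i : 'I_k), (lift ord0 i : nat) = i.+1 by [].
under [X in _ = _ + X]eq_bigr => i _ do rewrite L0 binS natrD !mulrDl subSS.
rewrite big_split /=.
have e2 : \sum_(i < m.+1) 'C(m, i)%:R * q ^+ i.+1 * (1 - q) ^+ (m - i) * F i.+1 =
   q * \sum_(l < m.+1) 'C(m, l)%:R * q ^+ l * (1 - q) ^+ (m - l) * F l.+1.
  by rewrite mulr_sumr; apply: eq_bigr => i _; rewrite exprS; ring.
rewrite e2.
have e1 : \sum_(i < m.+1) 'C(m, i.+1)%:R * q ^+ i.+1 * (1 - q) ^+ (m - i) * F i.+1 =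
   \sum_(i < m) 'C(m, i.+1)%:R * q ^+ i.+1 * (1 - q) ^+ (m - i) * F i.+1.
  by rewrite big_ord_recr /= bin_small // !mul0r addr0.
rewrite e1 [X in _ + (1 - q) * X = _]big_ord_recl bin0 subn0 mulrDr.
have e3 : (1 - q) * \sum_(i < m) 'C(m, lift ord0 i)%:R * q ^+ lift ord0 i * (1 - q) ^+ (m - lift ord0 i) * F (lift ord0 i)
  = \sum_(i < m) 'C(m, i.+1)%:R * q ^+ i.+1 * (1 - q) ^+ (m - i) * F i.+1.
  rewrite mulr_sumr; apply: eq_bigr => i _; rewrite L0.
  have -> : (m - i = (m - i.+1).+1)%N by rewrite subnSK.
  rewrite [(1 - q) ^+ (_.+1)]exprS; ring.
rewrite e3 [(1 - q) ^+ (_.+1)]exprS expr0; ring.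
Qed.

End Wth.
Arguments W {R}.
Section Sorting.
Local Open Scope ring_scope.
Variable R : realType.

Definition geR := (fun x y : R => (y <= x)%R).

Lemma sort_ge_count (l : seq R) k (t : R) :
  (k < count (fun x => (t <= x)%R) l)%N -> t <= nth 0 (sort geR l) k.
Proof.
set s := sort geR l.
have ss : sorted geR s.
  by apply: sort_sorted => x y; rewrite /geR; apply: le_total.
rewrite -(count_sort geR) -/s => hk.
rewrite leNgt; apply/negP => hlt.
move: hk; rewrite -(cat_take_drop k s) count_cat.
have -> : count (fun x => (t <= x)%R) (drop k s) = 0%N.
  apply/eqP; rewrite -leqn0 leqNgt -has_count; apply/hasPn => y.
  move/(nthP 0) => [j hj <-]; rewrite nth_drop -ltNge.
  rewrite size_drop in hj.
  have hkj : (k + j < size s)%N by rewrite -ltn_subRL.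
  have hk : (k < size s)%N by apply: leq_ltn_trans hkj; apply: leq_addr.
  have := @sorted_leq_nth _ geR (fun y x z (h1 : geR x y) (h2 : geR y z) => le_trans h2 h1) (fun x => lexx x) 0 s ss k (k + j) hk hkj (leq_addr _ _).
  by rewrite /geR => h; apply: le_lt_trans h hlt.
rewrite addn0 ltnNge; move/negP; apply.
by apply: leq_trans (count_size _ _) _; rewrite size_take; case: ltnP => // /ltnW.
Qed.

Lemma sort_ge_in01 (l : seq R) k :
  all (fun x => 0 <= x <= 1) l -> 0 <= nth 0 (sort geR l) k <= 1.
Proof.
move=> /allP H.
case: (ltnP k (size (sort geR l))) => hk; last by rewrite nth_default // lexx ler01.
apply: H; rewrite -(mem_sort geR); exact: mem_nth.
Qed.

Lemma sort_ge_lb (l : seq R) k (t : R) : 0 <= t ->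
  all (fun x => 0 <= x <= 1) l ->
  t * (k < count (fun x => (t <= x)%R) l)%:R <= nth 0 (sort geR l) k.
Proof.
move=> t0 hl; case: ltnP => h.
  by rewrite mulr1; apply: sort_ge_count.
by rewrite mulr0; case/andP: (sort_ge_in01 l k hl).
Qed.

End Sorting.
Section Integ.
Variable R : realType.
Variable D : probability R R.
Import HBNNSimple.

Lemma ae_le_nn (S : set R) (f g : R -> \bar R) : measurable S -> D (~` S) = 0 ->
  (forall x, 0 <= f x) -> (forall x, 0 <= g x) -> (forall x, S x -> f x <= g x) ->
  \int[D]_x f x <= \int[D]_x g x.
Proof.
move=> mS DS0 f0 g0 fg.
rewrite (ge0_integralTE D f0) (ge0_integralTE D g0) /=.
apply: ge_ereal_sup => _ [h /= hf <-].
pose h' := mul_nnsfun h (indic_nnsfun R mS).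
have h'E : forall x, h' x = (h x * \1_S x)%R by [].
have -> : sintegral D h = sintegral D h'.
  rewrite -!integralT_nnsfun.
  apply: ae_eq_integral => //.
  - by apply/measurable_realfun.measurable_EFinP; apply: measurable_funPT.
  - by apply/measurable_realfun.measurable_EFinP; apply: measurable_funPT.
  - exists (~` S); split => //; first exact: measurableC.
    move=> x /= hx Sx; apply: hx => _.
    by rewrite -[X in _ = (_ * X)%:E]/(\1_S x) indicE mem_set // mulr1.
apply: (@ereal_sup_ubound R _ (sintegral D h')); exists h' => //= x.
rewrite -[X in (_ * X)%:E <= _]/(\1_S x) indicE; case: (boolP (x \in S)) => xS.
  by rewrite mulr1; apply: le_trans (hf x) (fg x _); rewrite -inE.
by rewrite mulr0 g0.
Qed.

Lemma ae_le (S : set R) (f g : R -> \bar R) : measurable S -> D (~` S) = 0 ->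
  (forall x, S x -> f x <= g x) -> \int[D]_x f x <= \int[D]_x g x.
Proof.
move=> mS DS0 fg.
rewrite integralE [X in _ <= X]integralE; apply: leeB.
  apply: (ae_le_nn _ _ _ mS DS0) => [x|x|x Sx]; rewrite ?funepos_ge0 //.
  by rewrite !funeposE; apply: le_max2 => //; apply: fg.
apply: (ae_le_nn _ _ _ mS DS0) => [x|x|x Sx]; rewrite ?funeneg_ge0 //.
by rewrite !funenegE; apply: le_max2 => //; rewrite leeN2; apply: fg.
Qed.

Definition thr (t : R) := [set x : R | (t <= x)%R].

Lemma thr_meas t : measurable (thr t).
Proof.
rewrite (_ : thr t = [set` `[t, +oo[%R]); first exact: measurable_itv.
by apply/seteqP; split => x /=; rewrite in_itv /= andbT.
Qed.

Definition qt (t : R) : R := fine (D (thr t)).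

Lemma qtE t : D (thr t) = (qt t)%:E.
Proof. by rewrite /qt fineK //; apply: fin_num_measure; exact: thr_meas. Qed.

Lemma qt01 t : (0 <= qt t <= 1)%R.
Proof.
have h1 := probability_le1 D (thr_meas t).
have h0 : 0 <= D (thr t) by apply: measure_ge0.
by rewrite qtE in h1 h0; rewrite -!lee_fin h0 h1.
Qed.

Lemma int_thr (t a b : R) : (0 <= a)%R -> (0 <= b)%R ->
  \int[D]_x ((if (t <= x)%R then a else b)%:E) = (a * qt t + b * (1 - qt t))%:E.
Proof.
move=> a0 b0.
have mA := thr_meas t.
have mC : measurable (~` thr t) by exact: measurableC.
have -> : (fun x => (if (t <= x)%R then a else b)%:E) =
   (fun x => a%:E * (\1_(thr t) x)%:E + b%:E * (\1_(~` thr t) x)%:E).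
  apply: funext => x; rewrite !indicE.
  have m1 : (x \in thr t) = (t <= x)%R.
    by apply/idP/idP => [/set_mem //|H]; apply/mem_set.
  rewrite in_setC m1; case: ifP => h /=.
    by rewrite mule1 mule0 adde0.
  by rewrite mule1 mule0 add0e.
rewrite ge0_integralD //; last 4 first.
- by move=> x _; apply: mule_ge0; rewrite lee_fin // indicE.
- by apply: measurable_funeM; apply/measurable_realfun.measurable_EFinP; exact: measurable_realfun.measurable_indic.
- by move=> x _; apply: mule_ge0; rewrite lee_fin // indicE.
- by apply: measurable_funeM; apply/measurable_realfun.measurable_EFinP; exact: measurable_realfun.measurable_indic.
rewrite !ge0_integralZl //; try (by apply/measurable_realfun.measurable_EFinP; exact: measurable_realfun.measurable_indic);
  try (by move=> x _; rewrite lee_fin indicE).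
rewrite !integral_indic // !setIT.
rewrite [X in _ + _ * X = _](_ : _ = 1 - (qt t)%:E); last first.
  by rewrite -qtE; apply: probability_setC.
rewrite [X in _ * X + _ = _](_ : _ = (qt t)%:E); last by rewrite -qtE.
by rewrite -EFinB -!EFinM -EFinD.
Qed.

End Integ.
Arguments qt {R}.
Arguments thr {R}.
Section Iid.
Variable R : realType.
Variable D : probability R R.

Definition in01 (s : seq R) := all (fun x : R => (0 <= x <= 1)%R) s.

Lemma S01_meas : measurable ([set` `[0%R, 1%R]] : set R).
Proof.
have -> : ([set` `[0%R, 1%R]] : set R) = `[0%R, 1%R] by apply/seteqP; split => x /=; rewrite inE.
exact: measurable_itv.
Qed.

Lemma S01_mem (x : R) : ([set` `[0%R, 1%R]] : set R) x -> (0 <= x <= 1)%R.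
Proof. rewrite /= inE /= in_itv //. Qed.

Lemma iid_const k (c : R) : iid_expect D k (fun _ => c%:E) = c%:E.
Proof.
elim: k => [//|k IH] /=.
under eq_integral do rewrite IH.
rewrite integral_cst // [X in _ * X](_ : _ = 1) ?mule1 //.
exact: probability_setT.
Qed.

Lemma iid_mono k (g h : seq R -> \bar R) :
  D [set` `[0%R, 1%R]] = 1 ->
  (forall s, in01 s -> g s <= h s) -> iid_expect D k g <= iid_expect D k h.
Proof.
move=> D1; elim: k g h => [|k IH] g h gh /=; first by apply: gh.
have mS := S01_meas.
apply: (@ae_le R D _ _ _ mS).
  rewrite [LHS](_ : _ = 1 - D [set` `[0%R, 1%R]]); first by rewrite D1 subee.
  exact: probability_setC.
move=> x /= Sx; apply: IH => s hs; apply: gh.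
by rewrite /in01 /=; move: hs; rewrite /in01 => ->; rewrite andbT; apply: S01_mem.
Qed.

Lemma iid_thr (t : R) k (G : seq bool -> R) : (forall b, (0 <= G b)%R) ->
  iid_expect D k (fun s => (G (map (fun x => (t <= x)%R) s))%:E) = (W (qt D t) k G)%:E.
Proof.
elim: k G => [//|k IH] G G0 /=.
have e : forall x, iid_expect D k (fun s => (G (map (fun x => (t <= x)%R) (x :: s)))%:E)
   = (if (t <= x)%R then W (qt D t) k (fun b => G (true :: b)) else W (qt D t) k (fun b => G (false :: b)))%:E.
  move=> x; rewrite /= (IH (fun b => G ((t <= x)%R :: b))) //.
  by case: ifP.
under eq_integral do rewrite e.
rewrite int_thr; first by congr (_%:E); ring.
  by apply: (W_ge0 R) => //; apply: qt01.
by apply: (W_ge0 R) => //; apply: qt01.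
Qed.

End Iid.
Arguments in01 {R}.
Section Scores.
Local Open Scope ring_scope.
Variable R : realType.

Lemma fp_W (p : R) m k : fp_points p m k = W (1 - p) m (fun b => (k < count id b)%:R).
Proof.
rewrite (W_count_gen R (1 - p) m (fun c => (k < c)%:R)) /fp_points.
rewrite big_geq_mkord big_mkcond /=; apply: eq_bigr => l _.
have -> : 1 - (1 - p) = p by ring.
by case: ifP => h; rewrite /= ?mulr1 ?mulr0.
Qed.

Lemma fp_sum (p : R) m : \sum_(k < m) fp_points p m k = m%:R * (1 - p).
Proof.
under eq_bigr do rewrite fp_W.
rewrite -(W_sum R (1 - p) m 'I_m (fun (k : 'I_m) b => (k < count id b)%:R)).
rewrite -W_count; apply: W_ext => b hb.
have := sum_lt_count R m (count id b).
rewrite (_ : minn (count id b) m = count id b); last by apply/minn_idPl; rewrite -hb count_size.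
move=> <-; apply: eq_bigr => i _ //.
Qed.

Lemma score_lb (p : R) n m (sigma : profile n m) (w : 'I_m) :
  fp_winner p sigma w -> n%:R * (1 - p) <= fp_score p sigma w.
Proof.
move=> win.
have m0 : (0 < m)%N by apply: leq_ltn_trans (ltn_ord w).
have h1 : \sum_(j < m) fp_score p sigma j = n%:R * (m%:R * (1 - p)).
  rewrite /fp_score exchange_big /=.
  rewrite (eq_bigr (fun _ => m%:R * (1 - p))); first by rewrite sumr_const cardT size_enum_ord [RHS]mulr_natl.
  move=> i _; rewrite -(fp_sum p m).
  by rewrite [RHS](reindex_inj (@perm_inj _ (sigma i)^-1%g)).
have h2 : \sum_(j < m) fp_score p sigma j <= m%:R * fp_score p sigma w.
  by rewrite [X in _ <= X]mulr_natl -[X in _ *+ X]size_enum_ord -cardT -sumr_const; apply: ler_sum => j _; apply: win.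
rewrite h1 in h2.
have mp : (0 < m%:R :> R) by rewrite ltr0n.
rewrite -(ler_pM2l mp); apply: le_trans h2 => //; rewrite mulrCA //.
Qed.

End Scores.
Section Model2.
Variable R : realType.
Variable D : probability R R.
Variables (n m : nat) (sigma : profile n m).

Lemma vs_in01 (s : seq R) (i : 'I_n) : in01 s -> in01 (voter_samples m s i).
Proof.
move=> /allP hs; apply/allP => x /mem_take /mem_drop; exact: hs.
Qed.

Lemma sw_ub (s : seq R) j : in01 s -> (sw sigma s j <= n%:R)%R.
Proof.
move=> hs; rewrite /sw (_ : n%:R = \sum_(i < n) (1 : R))%R; last by rewrite sumr_const cardT size_enum_ord.
apply: ler_sum => i _; rewrite /utility.
by case/andP: (sort_ge_in01 R (voter_samples m s i) ((sigma i)^-1%g j) (vs_in01 s i hs)).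
Qed.

Lemma esw_ub j : D [set` `[0%R, 1%R]] = 1 -> expected_sw D sigma j <= n%:R%:E.
Proof.
move=> D1; rewrite /expected_sw -(iid_const R D (n * m) n%:R).
apply: iid_mono => // s hs; rewrite lee_fin; exact: sw_ub.
Qed.

Lemma W_block q (i : 'I_n) (H : seq bool -> R) :
  W q (n * m) (fun b => H (take m (drop (i * m) b))) = W q m H.
Proof.
have e : (n * m = i * m + (m + (n - i.+1) * m))%N.
  by rewrite -mulSn -mulnDl addnS -addSn subnKC.
by rewrite e (W_drop R q (i * m) _ (fun b => H (take m b))) W_take.
Qed.

Lemma esw_lb (p t : R) (w : 'I_m) : (p <= 1)%R -> D [set` `[0%R, 1%R]] = 1 ->
  (0 <= t)%R -> (1 - p <= qt D t)%R -> fp_winner p sigma w ->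
  ((t * (n%:R * (1 - p)))%:E <= expected_sw D sigma w).
Proof.
move=> hp D1 t0 hq win.
have q01 := qt01 R D t.
pose G := fun b : seq bool => (t * \sum_(i < n) (((sigma i)^-1%g w : nat) < count id (take m (drop (i * m) b)))%:R)%R.
have G0 : forall b, (0 <= G b)%R.
  by move=> b; apply: mulr_ge0 => //; apply: sumr_ge0 => i _; apply: ler0n.
apply: (@le_trans _ _ (iid_expect D (n * m) (fun s => (G (map (fun x => (t <= x)%R) s))%:E))); last first.
  apply: iid_mono => // s hs; rewrite lee_fin /G /sw mulr_sumr; apply: ler_sum => i _.
  rewrite -map_drop -map_take count_map.
  exact: (sort_ge_lb R (voter_samples m s i) _ t t0 (vs_in01 s i hs)).
rewrite iid_thr // lee_fin /G W_scale W_sum.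
have hp0 : (0 <= 1 - p)%R by rewrite subr_ge0.
apply: ler_wpM2l => //; apply: le_trans (score_lb R p n m sigma w win) _.
rewrite /fp_score; apply: ler_sum => i _.
rewrite (W_block _ i (fun l => (((sigma i)^-1%g w : nat) < count id l)%:R)%R) fp_W.
apply: (W_monoq R (1 - p)%R (qt D t) m (fun c => (((sigma i)^-1%g w : nat) < c)%:R)%R) => //.
  by case/andP: q01.
move=> c; rewrite ler_nat; case: ltnP => h //=; rewrite ?lt0b.
by rewrite ltnS ltnW.
Qed.

End Model2.
Section Quant.
Variable R : realType.
Variable D : probability R R.

Lemma Iy_meas (y : R) : measurable ([set` `]-oo, y]] : set R).
Proof.
have -> : ([set` `]-oo, y]] : set R) = `]-oo, y] by apply/seteqP; split => x /=; rewrite inE.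
exact: measurable_itv.
Qed.

Lemma Iy_mem (y x : R) : (x <= y)%R -> ([set` `]-oo, y]] : set R) x.
Proof. by move=> h; rewrite /= inE /= in_itv /= h. Qed.

Lemma Iy_mem' (y x : R) : ([set` `]-oo, y]] : set R) x -> (x <= y)%R.
Proof. by rewrite /= inE /= in_itv /=. Qed.

Lemma DC01 : D [set` `[0%R, 1%R]] = 1 -> D (~` [set` `[0%R, 1%R]]) = 0.
Proof.
move=> D1; rewrite [LHS](_ : _ = 1 - D [set` `[0%R, 1%R]]); first by rewrite D1 subee.
apply: probability_setC; exact: S01_meas.
Qed.

Lemma qt_from (p t y : R) : D [set` `]-oo, y]] <= p%:E -> (t < y)%R -> (1 - p <= qt D t)%R.
Proof.
move=> hy ty.
have h1 : D (~` thr t) <= D [set` `]-oo, y]].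
  apply: le_measure; rewrite ?inE; [exact: measurableC (thr_meas R t)|exact: Iy_meas|].
  move=> x /= hx; apply: Iy_mem; rewrite /thr /= in hx.
  by apply: ltW; apply: lt_trans ty; rewrite ltNge; apply/negP.
have h2 : D (~` thr t) = 1 - (qt D t)%:E.
  by rewrite -qtE; apply: probability_setC; exact: thr_meas.
have := le_trans h1 hy; rewrite h2 -EFinB lee_fin => h.
by rewrite lerBlDr addrC -lerBlDr.
Qed.

Lemma qt0 : D [set` `[0%R, 1%R]] = 1 -> (1 <= qt D 0)%R.
Proof.
move=> D1; rewrite -lee_fin -qtE -D1; apply: le_measure; rewrite ?inE.
- exact: S01_meas.
- exact: thr_meas.
by move=> x /S01_mem /andP[].
Qed.

End Quant.

Theorem corollary2 (R : realType) (p : R) (D : probability R R)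
  (n m : nat) (sigma : profile n m) (w : 'I_m) :
  (0 < p)%R -> (p <= 1)%R ->
  D [set` `[0%R, 1%R]] = 1 ->
  fp_winner p sigma w ->
  expected_sw D sigma w >=
    ((1 - p)%:E * quantileQ D p) *
      \big[Order.max/-oo]_(j < m) expected_sw D sigma j.
Proof.
move=> p0 p1 D1 win.
set E := expected_sw D sigma w.
set M := \big[Order.max/-oo]_(j < m) _.
have hp0 : (0 <= 1 - p)%R by rewrite subr_ge0.
have E0 : 0 <= E.
  have := esw_lb R D n m sigma p 0 w p1 D1 (lexx _) _ win.
  rewrite mul0r; apply; apply: le_trans (qt0 R D D1); rewrite lerBlDr lerDl; exact: ltW.
have Mub : M <= n%:R%:E.
  apply: bigmax_le => [|j _]; first exact: leNye.
  exact: esw_ub.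
have [->|hp] := eqVneq p 1%R.
  by rewrite subrr mul0e mul0e.
have plt : (p < 1)%R by rewrite lt_neqAle hp p1.
set Sq := [set y : R | D [set` `]-oo, y]] <= p%:E].
have Sq_lt1 : forall y, Sq y -> (y < 1)%R.
  move=> y Sy; rewrite ltNge; apply/negP => y1.
  have : D [set` `[0%R, 1%R]] <= D [set` `]-oo, y]].
    apply: le_measure; rewrite ?inE; [exact: S01_meas|exact: Iy_meas|].
    move=> x /S01_mem /andP[_ x1]; apply: Iy_mem; exact: le_trans x1 y1.
  rewrite D1 => h; have := le_trans h Sy; rewrite lee_fin leNgt plt //.
have Sq_neg : forall y, (y < 0)%R -> Sq y.
  move=> y y0; rewrite /Sq /=.
  apply: (@le_trans _ _ (D (~` [set` `[0%R, 1%R]]))).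
    apply: le_measure; rewrite ?inE; [exact: Iy_meas|exact: measurableC (S01_meas R)|].
    move=> x /Iy_mem' xy /S01_mem /andP[x0 _].
    by have := lt_le_trans (le_lt_trans xy y0) x0; rewrite ltxx.
  by rewrite DC01 // lee_fin ltW.
have Qub : quantileQ D p <= 1%:E.
  apply: ge_ereal_sup => _ [y Sy <-]; rewrite lee_fin; apply: ltW; exact: Sq_lt1.
have Qlb : (-1)%:E <= quantileQ D p.
  by apply: ereal_sup_ubound; exists (-1)%R => //; apply: Sq_neg; rewrite ltrN10.
have Qfin : quantileQ D p \is a fin_num.
  rewrite fin_numE; apply/andP; split.
    by apply/negP => /eqP h; rewrite h in Qlb.
  by apply/negP => /eqP h; rewrite h in Qub.
set r := fine (quantileQ D p).
have QE : quantileQ D p = r%:E by rewrite fineK.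
have r0 : (0 <= r)%R.
  rewrite leNgt; apply/negP => rneg.
  have : (r / 2)%:E <= quantileQ D p.
    apply: ereal_sup_ubound; exists (r / 2)%R => //; apply: Sq_neg; lra.
  rewrite QE lee_fin; lra.
set c := (n%:R * (1 - p))%R.
have c0 : (0 <= c)%R by apply: mulr_ge0.
have key : forall t : R, (0 <= t)%R -> (t < r)%R -> (t * c)%:E <= E.
  move=> t t0 tr; apply: esw_lb => //.
  have : t%:E < quantileQ D p by rewrite QE lte_fin.
  move/ereal_sup_gt => [_ [y Sy <-]]; rewrite lte_fin => ty.
  exact: qt_from Sy ty.
have Elb : (r * c)%:E <= E.
  move: E0 key; case: E => [e| |] E0 key; [|by rewrite leey|by move: E0; rewrite leeNy_eq].
  rewrite lee_fin; rewrite lee_fin in E0.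
  rewrite leNgt; apply/negP => he.
  have cpos : (0 < c)%R.
    rewrite lt_neqAle c0 andbT; apply/negP => /eqP c00.
    by move: he; rewrite -c00 mulr0 ltNge E0.
  have rpos : (0 < r)%R.
    rewrite lt_neqAle r0 andbT; apply/negP => /eqP r00.
    by move: he; rewrite -r00 mul0r ltNge E0.
  set t := ((e / c + r) / 2)%R.
  have ec : (e / c * c = e)%R by rewrite divfK // gt_eqF.
  have ecr : (e / c < r)%R by rewrite ltr_pdivrMr.
  have ec0 : (0 <= e / c)%R by apply: divr_ge0 => //; apply: ltW.
  have ht0 : (0 <= t)%R by rewrite /t; lra.
  have htr : (t < r)%R by rewrite /t; lra.
  have := key t ht0 htr; rewrite lee_fin.
  have htc : (t * c = (e / c * c + r * c) / 2)%R by rewrite /t mulrAC mulrDl.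
  rewrite htc ec => H.
  have : (e < (e + r * c) / 2)%R by lra.
  by rewrite ltNge H.
apply: le_trans Elb.
rewrite QE -EFinM.
apply: le_trans (lee_wpmul2l _ Mub) _.
  by rewrite lee_fin; apply: mulr_ge0.
rewrite -EFinM lee_fin /c; rewrite [X in (_ <= X)%R](_ : _ = (1 - p) * r * n%:R)%R //; ring.
Qed.
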